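(* There is an absolute constant $c>0$ such that the following holds. Let $k\geq 2$ be an integer and let $A=\{a_1<\cdots<a_N\}$ be a finite set of real numbers which is $k$-convex. Then \[ |2^{k}A-(2^{k}-1)A|\geq c\,\frac{|A|^{k+1}}{2^{k^2}}. \]
   Context: For a set $A\subset\mathbb{R}$ and nonnegative integers $m,n$, $mA-nA=\{(x_1+\cdots+x_m)-(x_{m+1}+\cdots+x_{m+n}):x_1,\ldots,x_{m+n}\in A\}$. A finite set $A=\{a_1<\cdots<a_N\}$ of reals is regarded as the sequence of its elements in increasing order. Such a sequence is called $1$-convex (convex) if its sequence of first differences $a_{i+1}-a_i$, $1\leq i\leq N-1$, is strictly increasing. Inductively, for $k\geq 2$, the increasing sequence $a_1<\cdots<a_N$ is called $k$-convex if its sequence of first differences $(a_{i+1}-a_i)_{1\le i\le N-1}$ is $(k-1)$-convex (in particular this difference sequence is itself strictly increasing). *)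

(* Defs.v *)
From Stdlib Require Import Reals List.
Open Scope R_scope.

(* A finite set A = {a_0 < ... < a_(N-1)} is represented by the function
   a : nat -> R restricted to indices < N. *)

Definition strictly_increasing_upto (a : nat -> R) (N : nat) : Prop :=
  forall i : nat, (S i < N)%nat -> a i < a (S i).

Definition diffseq (a : nat -> R) : nat -> R := fun i => a (S i) - a i.

Fixpoint kconvex (k : nat) (a : nat -> R) (N : nat) : Prop :=
  match k with
  | O => strictly_increasing_upto a N
  | S k' => strictly_increasing_upto a N /\ kconvex k' (diffseq a) (N - 1)
  end.

Fixpoint sumR (m : nat) (u : nat -> R) : R :=
  match m with
  | O => 0
  | S m' => sumR m' u + u m'
  end.

(* x belongs to mA - nA, where A = {a i | i < N}. *)
Definition in_sumdiff (m n : nat) (a : nat -> R) (N : nat) (x : R) : Prop :=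
  exists f g : nat -> nat,
    (forall i, (i < m)%nat -> (f i < N)%nat) /\
    (forall j, (j < n)%nat -> (g j < N)%nat) /\
    x = sumR m (fun i => a (f i)) - sumR n (fun j => a (g j)).

(* Main.v *)
Require Import Defs.
From Stdlib Require Import Reals List Lia Lra Arith.
Open Scope R_scope.

Fixpoint concatN (f : nat -> list R) (n : nat) : list R :=
  match n with O => nil | S n' => concatN f n' ++ f n' end.

Fixpoint nsum (g : nat -> nat) (n : nat) : nat :=
  match n with O => 0%nat | S n' => (nsum g n' + g n')%nat end.

Lemma in_concatN f n x : In x (concatN f n) <-> exists j, (j < n)%nat /\ In x (f j).
Proof.
  induction n; simpl.
  - split; [tauto| intros [j [H _]]; lia].
  - rewrite in_app_iff, IHn. split.
    + intros [[j [Hj Hx]]|Hx]; [exists j; split; [lia|auto] | exists n; split; [lia|auto]].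
    + intros [j [Hj Hx]]. destruct (Nat.eq_dec j n) as [->|]; [right; auto| left; exists j; split; [lia|auto]].
Qed.

Lemma length_concatN f n : length (concatN f n) = nsum (fun j => length (f j)) n.
Proof. induction n; simpl; auto. rewrite length_app; lia. Qed.

Lemma nsum_ext g h n : (forall j, (j < n)%nat -> g j = h j) -> nsum g n = nsum h n.
Proof. induction n; simpl; intros H; auto. rewrite IHn, H; auto. Qed.

Lemma mono_le (b : nat -> R) n : (forall j, (j < n)%nat -> b j <= b (S j)) ->
  forall j, (j <= n)%nat -> b j <= b n.
Proof.
  induction n; intros H j Hj.
  - replace j with 0%nat by lia; lra.
  - destruct (Nat.eq_dec j (S n)) as [->|]; [lra|].
    apply Rle_trans with (b n); [apply IHn; [intros; apply H; lia| lia]| apply H; lia].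
Qed.

Lemma nodup_concatN (f : nat -> list R) (b : nat -> R) n :
  (forall j, (j < n)%nat -> NoDup (f j)) ->
  (forall j x, (j < n)%nat -> In x (f j) -> b j <= x < b (S j)) ->
  (forall j, (j < n)%nat -> b j <= b (S j)) ->
  NoDup (concatN f n).
Proof.
  induction n; intros H1 H2 H3; simpl; [constructor|].
  apply NoDup_app.
  - apply IHn; intros; [apply H1|apply H2|apply H3]; auto; lia.
  - apply H1; lia.
  - intros x Hx Hx'. apply in_concatN in Hx. destruct Hx as [j [Hj Hx]].
    pose proof (H2 j x ltac:(lia) Hx). pose proof (H2 n x ltac:(lia) Hx').
    assert (b (S j) <= b n) by (apply (mono_le b n); [intros; apply H3; lia| lia]).
    lra.
Qed.

Fixpoint E (k : nat) (a : nat -> R) (i : nat) : list R :=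
  match k with
  | O => a i :: nil
  | S k' => map (fun y => a i + y) (concatN (E k' (diffseq a)) i)
  end.

Fixpoint cnt (k i : nat) : nat :=
  match k with O => 1%nat | S k' => nsum (cnt k') i end.

Lemma length_E k : forall a i, length (E k a i) = cnt k i.
Proof.
  induction k; intros a i; simpl; auto.
  rewrite length_map, length_concatN. apply nsum_ext. intros; auto.
Qed.

Lemma sumR_ext m u v : (forall t, (t < m)%nat -> u t = v t) -> sumR m u = sumR m v.
Proof. induction m; simpl; intros H; auto. rewrite IHm, H; auto. Qed.

Lemma sumR_add p q u : sumR (p+q) u = sumR p u + sumR q (fun t => u (p+t)%nat).
Proof.
  induction q; simpl.
  - rewrite Nat.add_0_r; ring.
  - rewrite Nat.add_succ_r; simpl; rewrite IHq; ring.
Qed.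

Lemma sumR_minus m u v : sumR m (fun t => u t - v t) = sumR m u - sumR m v.
Proof. induction m; simpl; [ring|rewrite IHm; ring]. Qed.

Lemma sumR_const m c : sumR m (fun _ => c) = INR m * c.
Proof. induction m; simpl sumR; [simpl; ring| rewrite IHm, S_INR; ring]. Qed.

Definition SI := strictly_increasing_upto.

Lemma kconvex_SI k a N : kconvex k a N -> SI a N.
Proof. destruct k; simpl; tauto. Qed.

Lemma shift m n a N y i0 : in_sumdiff m n (diffseq a) (N-1) y -> (i0 < N)%nat ->
  in_sumdiff (m+n+1) (m+n) a N (a i0 + y).
Proof.
  intros [f [g [Hf [Hg Hy]]]] Hi0.
  exists (fun t => if (t <? m)%nat then S (f t) else if (t <? m+n)%nat then g (t-m)%nat else i0).
  exists (fun t => if (t <? m)%nat then f t else S (g (t-m)%nat)).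
  split; [|split].
  - intros t Ht. destruct (Nat.ltb_spec t m); [pose proof (Hf t H); simpl; lia|].
    destruct (Nat.ltb_spec t (m+n)); [pose proof (Hg (t-m)%nat ltac:(lia)); simpl; lia| simpl; lia].
  - intros t Ht. destruct (Nat.ltb_spec t m); [pose proof (Hf t H); simpl; lia|].
    pose proof (Hg (t-m)%nat ltac:(lia)); simpl; lia.
  - rewrite Nat.add_1_r. simpl sumR. rewrite !sumR_add.
    rewrite (sumR_ext m (fun t => a (if (t <? m)%nat then S (f t) else if (t <? m+n)%nat then g (t-m)%nat else i0)) (fun t => a (S (f t)))).
    2:{ intros t Ht. destruct (Nat.ltb_spec t m); [auto|lia]. }
    rewrite (sumR_ext n (fun t => a (if (m+t <? m)%nat then S (f (m+t)%nat) else if (m+t <? m+n)%nat then g (m+t-m)%nat else i0)) (fun t => a (g t))).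
    2:{ intros t Ht. destruct (Nat.ltb_spec (m+t) m); [lia|].
        destruct (Nat.ltb_spec (m+t) (m+n)); [|lia]. f_equal; f_equal; lia. }
    rewrite (sumR_ext m (fun t => a (if (t <? m)%nat then f t else S (g (t-m)%nat))) (fun t => a (f t))).
    2:{ intros t Ht. destruct (Nat.ltb_spec t m); [auto|lia]. }
    rewrite (sumR_ext n (fun t => a (if (m+t <? m)%nat then f (m+t)%nat else S (g (m+t-m)%nat))) (fun t => a (S (g t)))).
    2:{ intros t Ht. destruct (Nat.ltb_spec (m+t) m); [lia|]. replace (m+t-m)%nat with t by lia; reflexivity. }
    destruct (Nat.ltb_spec (m+n) m); [lia|]. destruct (Nat.ltb_spec (m+n) (m+n)); [lia|].
    rewrite Hy. unfold diffseq.
    rewrite (sumR_minus m (fun t => a (S (f t))) (fun t => a (f t))).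
    rewrite (sumR_minus n (fun t => a (S (g t))) (fun t => a (g t))).
    ring.
Qed.

Lemma E_prop k : forall a N, kconvex k a N -> forall i, (S i < N)%nat ->
  NoDup (E k a i) /\ forall x, In x (E k a i) -> a i <= x < a (S i) /\
     in_sumdiff (2^k) (2^k - 1) a N x.
Proof.
  induction k; intros a N HK i Hi.
  - simpl in HK. simpl. split.
    + constructor; [intros H; inversion H| constructor].
    + intros x [<-|[]]. split; [pose proof (HK i Hi); lra|].
      exists (fun _ => i), (fun _ => 0%nat). split; [intros; lia| split; [intros; lia|]].
      simpl; ring.
  - destruct HK as [HA HD].
    pose proof (kconvex_SI _ _ _ HD) as SD.
    assert (Hmono : forall j, (j < i)%nat -> diffseq a j <= diffseq a (S j)).
    { intros j Hj. pose proof (SD j ltac:(lia)). lra. }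
    simpl. split.
    + apply NoDup_map_NoDup_ForallPairs.
      * intros u v _ _ Huv. lra.
      * apply nodup_concatN with (b := diffseq a); auto.
        -- intros j Hj. apply (IHk _ _ HD j). lia.
        -- intros j x Hj Hx. apply (IHk _ _ HD j ltac:(lia)); auto.
    + intros x Hx. apply in_map_iff in Hx. destruct Hx as [y [<- Hy]].
      apply in_concatN in Hy. destruct Hy as [j [Hj Hy]].
      destruct (IHk _ _ HD j ltac:(lia)) as [_ Hp]. destruct (Hp y Hy) as [[Hl Hu] Hs].
      assert (diffseq a 0 <= diffseq a j).
      { pose proof (mono_le (diffseq a) j ltac:(intros; apply Hmono; lia) 0%nat ltac:(lia)). auto. }
      assert (diffseq a (S j) <= diffseq a i) by (apply (mono_le (diffseq a) i Hmono); lia).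
      assert (0 < diffseq a 0) by (unfold diffseq; pose proof (HA 0%nat ltac:(lia)); lra).
      split; [unfold diffseq in *; lra|].
      pose proof (Nat.pow_nonzero 2 k ltac:(lia)).
      match goal with |- in_sumdiff ?p ?q _ _ _ =>
        replace q with (2^k + (2^k-1))%nat by lia; replace p with (2^k + (2^k-1) + 1)%nat by lia end.
      apply shift; auto; lia.
Qed.

Lemma cnt_mono k i d : (cnt k i <= cnt k (i + d))%nat.
Proof.
  induction d; [rewrite Nat.add_0_r; lia|].
  rewrite Nat.add_succ_r. destruct k; simpl; [lia|]. simpl in IHd. lia.
Qed.

Lemma cnt_shift k i t : (t * cnt k i <= cnt (S k) (i + t))%nat.
Proof.
  induction t; [simpl; lia|].
  rewrite Nat.add_succ_r. simpl. simpl in IHt. pose proof (cnt_mono k i t). lia.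
Qed.

Lemma cnt_pow k m : (m ^ k <= cnt k (k * m))%nat.
Proof.
  induction k; [simpl; lia|].
  replace (S k * m)%nat with (k * m + m)%nat by lia.
  pose proof (cnt_shift k (k*m) m). simpl Nat.pow.
  pose proof (Nat.mul_le_mono_l _ _ m IHk). lia.
Qed.

Lemma pow_helper x e k : (x <= 2^e)%nat -> (e*(k+1) <= 6 + k*k)%nat ->
  (x^(k+1) <= 2^6 * 2^(k*k))%nat.
Proof.
  intros H1 H2.
  apply Nat.le_trans with ((2^e)^(k+1))%nat; [apply Nat.pow_le_mono_l; auto|].
  rewrite <- Nat.pow_mul_r, <- Nat.pow_add_r. apply Nat.pow_le_mono_r; lia.
Qed.

Lemma big_pow j : (2*(j+5)+2 <= 2^(j+4))%nat.
Proof.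
  induction j; [simpl; lia|].
  replace (S j + 4)%nat with (S (j+4)) by lia. simpl Nat.pow. lia.
Qed.

Lemma key k : (2 <= k)%nat -> ((2*k+2)^(k+1) <= 2^6 * 2^(k*k))%nat.
Proof.
  intros Hk.
  destruct (Nat.eq_dec k 2) as [->|]; [apply (pow_helper _ 3); simpl; lia|].
  destruct (Nat.eq_dec k 3) as [->|]; [apply (pow_helper _ 3); simpl; lia|].
  destruct (Nat.eq_dec k 4) as [->|]; [apply (pow_helper _ 4); simpl; lia|].
  apply (pow_helper _ (k-1)); [|nia].
  pose proof (big_pow (k-5)). replace (k - 5 + 5)%nat with k in H by lia.
  replace (k-5+4)%nat with (k-1)%nat in H by lia. lia.
Qed.

Lemma nat_bound k N len m : (2 <= k)%nat -> (m ^ (k+1) <= len)%nat ->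
  ((1 <= N)%nat -> (1 <= len)%nat) -> (N <= (k+1)*(m+1))%nat ->
  (N^(k+1) <= 2^6 * 2^(k*k) * len)%nat.
Proof.
  intros Hk Hm H1 HN.
  destruct N; [rewrite Nat.pow_0_l; lia|].
  specialize (H1 ltac:(lia)).
  apply Nat.le_trans with (((k+1)*(m+1))^(k+1))%nat; [apply Nat.pow_le_mono_l; auto|].
  rewrite Nat.pow_mul_l.
  assert (Hm2 : ((m+1)^(k+1) <= 2^(k+1) * len)%nat).
  { destruct m.
    - rewrite Nat.pow_1_l. pose proof (Nat.pow_nonzero 2 (k+1) ltac:(lia)). nia.
    - apply Nat.le_trans with ((2 * S m)^(k+1))%nat; [apply Nat.pow_le_mono_l; lia|].
      rewrite Nat.pow_mul_l. apply Nat.mul_le_mono_l; auto. }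
  apply Nat.le_trans with ((k+1)^(k+1) * (2^(k+1) * len))%nat; [apply Nat.mul_le_mono_l; auto|].
  rewrite Nat.mul_assoc, <- Nat.pow_mul_l.
  apply Nat.mul_le_mono_r. replace ((k+1)*2)%nat with (2*k+2)%nat by lia. apply key; auto.
Qed.

Theorem theorem3 :
  exists c : R, c > 0 /\
    forall (k : nat) (a : nat -> R) (N : nat),
      (2 <= k)%nat ->
      kconvex k a N ->
      forall L : list R,
        NoDup L ->
        (forall x : R, In x L <-> in_sumdiff (2 ^ k) (2 ^ k - 1) a N x) ->
        INR (length L) >= c * INR N ^ (k + 1) / 2 ^ (k * k).
Proof.
  exists (1/64). split; [lra|].
  intros k a N Hk HK L HL HLs.
  pose proof (kconvex_SI _ _ _ HK) as HA.
  set (M := concatN (E k a) (N-1)).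
  assert (HM : NoDup M).
  { apply nodup_concatN with (b := a).
    - intros j Hj. apply (E_prop k a N HK j). lia.
    - intros j x Hj Hx. apply (E_prop k a N HK j ltac:(lia)); auto.
    - intros j Hj. pose proof (HA j ltac:(lia)). lra. }
  assert (Hinc : incl M L).
  { intros x Hx. apply in_concatN in Hx. destruct Hx as [j [Hj Hx]].
    apply HLs. apply (E_prop k a N HK j ltac:(lia)); auto. }
  pose proof (NoDup_incl_length HM Hinc) as Hlen.
  unfold M in Hlen. rewrite length_concatN in Hlen.
  rewrite (nsum_ext _ (cnt k) _ (fun j _ => length_E k a j)) in Hlen.
  change (nsum (cnt k) (N-1)) with (cnt (S k) (N-1)) in Hlen.
  set (m := ((N-1) / (S k))%nat).
  assert (Hdm : (S k * m <= N - 1)%nat) by apply Nat.Div0.mul_div_le.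
  assert (Hdm2 : (N - 1 < S k * (m + 1))%nat).
  { pose proof (Nat.div_mod (N-1) (S k) ltac:(lia)).
    pose proof (Nat.mod_upper_bound (N-1) (S k) ltac:(lia)). fold m in H. lia. }
  assert (Hc : (m ^ (k+1) <= length L)%nat).
  { rewrite Nat.add_1_r. eapply Nat.le_trans; [apply cnt_pow|].
    eapply Nat.le_trans; [|apply Hlen].
    replace (N-1)%nat with (S k * m + (N - 1 - S k * m))%nat by lia. apply cnt_mono. }
  assert (H1 : (1 <= N)%nat -> (1 <= length L)%nat).
  { intros HN. destruct L; [|simpl; lia].
    exfalso. apply (proj2 (HLs (a 0%nat))).
    exists (fun _ => 0%nat), (fun _ => 0%nat). split; [intros; lia|split; [intros; lia|]].
    rewrite !sumR_const. pose proof (Nat.pow_nonzero 2 k ltac:(lia)).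
    rewrite minus_INR by lia. simpl INR. ring. }
  pose proof (nat_bound k N (length L) m Hk Hc H1 ltac:(lia)) as HB.
  apply le_INR in HB. rewrite !mult_INR, !pow_INR in HB.
  replace (INR 2) with 2 in HB by (simpl; ring).
  assert (HP : 0 < 2 ^ (k*k)) by (apply pow_lt; lra).
  set (P := 2 ^ (k*k)) in *. set (X := INR N ^ (k+1)) in *.
  apply Rle_ge.
  apply Rmult_le_reg_r with (64 * P); [lra|].
  replace (1 / 64 * X / P * (64 * P)) with X by (field; lra).
  simpl pow in HB. nra.
Qed.
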